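(* Let $(H_1,+_1,\circ_1)$ and $(H_2,+_2,\circ_2)$ be commutative multiplicative hyperrings with identity, and let $P_1$ and $P_2$ be nonzero proper strong $\mathcal{C}$-hyperideals of $H_1$ and $H_2$, respectively. Then $P_1$ is an sdf-absorbing hyperideal of $H_1$ if and only if $P_1\times H_2$ is an sdf-absorbing hyperideal of $H_1\times H_2$.
   Context: A commutative multiplicative hyperring $(H,+,\circ)$ consists of an abelian group $(H,+)$ and an associative, commutative hyperoperation $\circ: H\times H\to P^*(H)$ with $x\circ(y+z)\subseteq x\circ y+x\circ z$ and $x\circ(-y)=-(x\circ y)=(-x)\circ y$. For subsets $A,B$, $A\circ B=\bigcup_{a\in A,b\in B}a\circ b$, $A\pm B=\{a\pm b\}$; $x^2=x\circ x$. Identity: $x\in x\circ 1$ for all $x$. $H_1\times H_2$ is the hyperring with $(x_1,x_2)+(y_1,y_2)=(x_1+_1y_1,x_2+_2y_2)$ and $(x_1,x_2)\circ(y_1,y_2)=\{(a,b): a\in x_1\circ_1y_1, b\in x_2\circ_2y_2\}$. A hyperideal is a nonempty $P$ with $x-y\in P$ and $r\circ x\subseteq P$ for $x,y\in P$, $r\in H$. Let $\mathcal{C}=\{c_1\circ\cdots\circ c_n: c_i\in H\}$ and $\mathfrak{C}=\{\sum_{i=1}^m C_i: C_i\in\mathcal{C}\}$; $P$ is a strong $\mathcal{C}$-hyperideal if for every $D\in\mathfrak{C}$, $D\cap P\neq\varnothing$ implies $D\subseteq P$. A proper hyperideal $P$ is sdf-absorbing if whenever $x,y$ are nonzero and $x^2-y^2\subseteq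 P$, then $x-y\in P$ or $x+y\in P$. *)

(* Defs.v *)
From HB Require Import structures.
From mathcomp Require Import all_boot all_algebra.
Set Implicit Arguments. Unset Strict Implicit. Unset Printing Implicit Defensive.
Import GRing.Theory.
Local Open Scope ring_scope.

(* A hyperoperation on H is represented by its membership relation:
   hm x y z  <->  z \in x o y. *)
Definition hyperop (H : Type) := H -> H -> H -> Prop.

Section Hyper.
Variable H : zmodType.
Variable hm : hyperop H.

Definition comm_mult_hyperring : Prop :=
  [/\ (forall x y, exists z, hm x y z),
      (forall x y z w, (exists a, hm x y a /\ hm a z w) <->
                       (exists b, hm y z b /\ hm x b w)),           (* associativity *)
      (forall x y z, hm x y z <-> hm y x z),
      (forall x y z w, hm x (y + z) w ->
         exists a b, [/\ hm x y a, hm x z b & w = a + b])           (* x o (y+z) <= x o y + x o z *)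
    & (forall x y w, (hm x (- y) w <-> hm x y (- w)) /\
                     (hm (- x) y w <-> hm x y (- w)))].             (* x o (-y) = -(x o y) = (-x) o y *)

Definition has_identity : Prop := exists e : H, forall x, hm x e x.

Definition hyperideal (P : H -> Prop) : Prop :=
  [/\ exists x, P x,
      (forall x y, P x -> P y -> P (x - y))
    & (forall r x z, P x -> hm r x z -> P z)].

Definition proper_set (P : H -> Prop) : Prop := exists x, ~ P x.
Definition nonzero_set (P : H -> Prop) : Prop := exists x, P x /\ x <> 0.

(* c o c1 o ... o cn as a set (n >= 0) *)
Fixpoint hprod (c : H) (cs : seq H) : H -> Prop :=
  match cs with
  | [::] => fun z => z = c
  | d :: ds => fun z => exists a, hprod d ds a /\ hm c a z
  end.

(* finite (nonempty) sums of elements of the family C *)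
Fixpoint hsum (t : H * seq H) (ts : seq (H * seq H)) : H -> Prop :=
  match ts with
  | [::] => hprod t.1 t.2
  | u :: us => fun z => exists a b, [/\ hprod t.1 t.2 a, hsum u us b & z = a + b]
  end.

Definition strong_C_hyperideal (P : H -> Prop) : Prop :=
  hyperideal P /\
  forall t ts, (exists z, hsum t ts z /\ P z) -> forall z, hsum t ts z -> P z.

(* x^2 - y^2 as a set *)
Definition sq_diff (x y : H) : H -> Prop :=
  fun z => exists a b, [/\ hm x x a, hm y y b & z = a - b].

Definition sdf_absorbing (P : H -> Prop) : Prop :=
  [/\ hyperideal P, proper_set P &
      forall x y, x <> 0 -> y <> 0 -> (forall z, sq_diff x y z -> P z) ->
        P (x - y) \/ P (x + y)].
End Hyper.

Definition prod_hyperop (H1 H2 : Type) (m1 : hyperop H1) (m2 : hyperop H2) :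
  hyperop (H1 * H2) :=
  fun x y z => m1 x.1 y.1 z.1 /\ m2 x.2 y.2 z.2.

Definition prod_set (H1 H2 : Type) (P : H1 -> Prop) : H1 * H2 -> Prop :=
  fun p => P p.1.

(* Main.v *)
Require Import Defs.
From mathcomp Require Import all_boot all_algebra.
Set Implicit Arguments. Unset Strict Implicit.
Import GRing.Theory.
Local Open Scope ring_scope.

Section Aux.
Variable H : zmodType.
Variable hm : hyperop H.
Variable P : H -> Prop.
Hypothesis hP : hyperideal hm P.

Lemma hP0 : P 0.
Proof. case: hP => [[x Px] Hs _]. by rewrite -(subrr x); apply: Hs. Qed.
Lemma hPN x : P x -> P (- x).
Proof. case: hP => [_ Hs _] Px. rewrite -sub0r. apply: Hs => //. exact: hP0. Qed.
Lemma hPD x y : P x -> P y -> P (x + y).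
Proof. case: hP => [_ Hs _] Px Py. rewrite -(opprK y). apply: Hs => //. exact: hPN. Qed.
Lemma hPB x y : P x -> P y -> P (x - y).
Proof. case: hP => [_ Hs _]. exact: Hs. Qed.
End Aux.

Lemma sq_in (H : zmodType) (hm : hyperop H) (P : H -> Prop) u :
  sdf_absorbing hm P -> nonzero_set P -> u <> 0 -> (forall a, hm u u a -> P a) -> P u.
Proof.
move=> [hP _ Hs] [p [Pp pn]] un Hu.
have hPa := hP; case: hPa => [_ _ Ha].
have [H1|H1] : P (u - p) \/ P (u + p).
  apply: Hs => // z [a [b [ha hb ->]]].
  apply: (hPB hP); [exact: Hu | exact: Ha hb].
- by rewrite -(subrK p u); apply: (hPD hP).
- by rewrite -(addrK p u); apply: (hPB hP).
Qed.

Theorem mainTheorem15 (H1 H2 : zmodType) (m1 : hyperop H1) (m2 : hyperop H2)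
  (P1 : H1 -> Prop) (P2 : H2 -> Prop) :
  comm_mult_hyperring m1 -> has_identity m1 ->
  comm_mult_hyperring m2 -> has_identity m2 ->
  strong_C_hyperideal m1 P1 -> nonzero_set P1 -> proper_set P1 ->
  strong_C_hyperideal m2 P2 -> nonzero_set P2 -> proper_set P2 ->
  (sdf_absorbing m1 P1 <->
   sdf_absorbing (prod_hyperop m1 m2) (@prod_set H1 H2 P1)).
Proof.
move=> [ne1 _ _ _ _] _ [ne2 _ _ _ _] _ _ nz1 pr1 _ _ _.
split.
- move=> sdf. have sdf' := sdf. case: sdf' => [hP [q nq] Hs].
  have hP' := hP; case: hP' => [[x0 Px0] Hsub Ha].
  split.
  + split; first by exists (x0, 0).
    * by move=> x y; rewrite /prod_set /= => Px Py; apply: Hsub.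
    * by move=> r x z; rewrite /prod_set => Px [h _]; apply: Ha h.
  + by exists (q, 0).
  + move=> [x1 x2] [y1 y2] xn yn Hz; rewrite /prod_set /=.
    have [a2 ha2] := ne2 x2 x2. have [b2 hb2] := ne2 y2 y2.
    have Hsq : forall a b, m1 x1 x1 a -> m1 y1 y1 b -> P1 (a - b).
      move=> a b ha hb.
      exact: (Hz (a - b, a2 - b2) (ex_intro _ (a, a2) (ex_intro _ (b, b2)
               (And3 (conj ha ha2) (conj hb hb2) erefl)))).
    have H00 : forall c, m1 0 0 c -> P1 c.
      by move=> c hc; apply: Ha hc; exact: (hP0 hP).
    have [c hc] := ne1 0 0.
    case: (eqVneq x1 0) => [ex|/eqP xn1].
      case: (eqVneq y1 0) => [ey|/eqP yn1].
        by left; rewrite ex ey subrr; exact: (hP0 hP).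
      left; rewrite ex sub0r; apply: (hPN hP).
      apply: (sq_in sdf nz1) => // b hb.
      have h1 : P1 (c - b) by apply: Hsq => //; rewrite ex.
      have := hPB hP (H00 c hc) h1.
      by rewrite opprB addrC subrK.
    case: (eqVneq y1 0) => [ey|/eqP yn1].
      left; rewrite ey subr0.
      apply: (sq_in sdf nz1) => // a ha.
      rewrite -(subrK c a). apply: (hPD hP); last exact: H00.
      by apply: Hsq => //; rewrite ey.
    apply: Hs => // z [a [b [ha hb ->]]]. exact: Hsq.
- move=> [hP [[q q2] nq] Hs].
  have [ha2 hw] := ne2 0 0.
  case: hP => [_ Hsub Ha].
  have hP1 : hyperideal m1 P1.
    split.
    + by case: nz1 => p [Pp _]; exists p.
    + by move=> x y Px Py; apply: (Hsub (x, 0) (y, 0)).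
    + move=> r x z Px h.
      exact: (Ha (r, 0) (x, 0) (z, ha2) Px (conj h hw)).
  split => //.
  move=> x y xn yn Hz.
  have := Hs (x, 0) (y, 0).
  rewrite /prod_set /=; apply.
  + by case.
  + by case.
  + by move=> z [[a a2] [[b b2] [[h1 _] [h2 _] ->]]] /=; apply: Hz; exists a, b.
Qed.
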